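(* Let $G\subset\mathbb{R}^n$ be a convex body and let $K,L$ be compact convex subsets of $G$. Then there exist $u\in\mathbb{S}^{n-1}$ and either a point $q\in L$ such that $$\mathrm{int}\big(C_G(u,d_{\mathcal H}(K,L))+q\big)\subset (G+K\,\widetilde{\cup}\,L)\setminus(G+K),$$ or a point $q\in K$ such that $$\mathrm{int}\big(C_G(u,d_{\mathcal H}(K,L))+q\big)\subset (G+K\,\widetilde{\cup}\,L)\setminus(G+L).$$
   Context: A convex body is a compact convex set with non-empty interior. $K\,\widetilde{\cup}\,L$ is the closed convex hull of $K\cup L$; sums are Minkowski sums; $\mathrm{int}$ denotes Euclidean interior. $d_{\mathcal H}$ is the Hausdorff distance. The support function is $h_G(x)=\max\{y\cdot x: y\in G\}$, and for $u\in\mathbb{S}^{n-1}$ and $h\ge 0$ the cap of $G$ in direction $u$ with height $h$ is $C_G(u,h)=\{x\in G: u\cdot x\ge h_G(u)-h\}$. *)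

(* Defs.v *)
From HB Require Import structures.
From mathcomp Require Import all_boot all_order all_algebra.
From mathcomp Require Import all_classical all_reals all_analysis.
Set Implicit Arguments. Unset Strict Implicit. Unset Printing Implicit Defensive.
Import Order.TTheory GRing.Theory Num.Theory.
Import numFieldNormedType.Exports.
Local Open Scope classical_set_scope.
Local Open Scope ring_scope.

Section Defs.
Variables (R : realType) (n : nat).
Notation V := 'rV[R]_n.

Definition dotv (x y : V) : R := \sum_(i < n) x ord0 i * y ord0 i.
Definition enorm (x : V) : R := Num.sqrt (dotv x x).

Definition unit_sphere : set V := [set u | enorm u = 1].

Definition convex_body (G : set V) : Prop :=
  compact G /\ convex_set G /\ (interior G !=set0).

Definition minksum (A B : set V) : set V := [set a + b | a in A & b in B].

(* closed convex hull of K ∪ L: smallest closed convex set containing K ∪ L *)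
Definition cconv_union (K L : set V) : set V :=
  [set x | forall C : set V, closed C -> convex_set C -> K `|` L `<=` C -> C x].

Definition supp_fun (G : set V) (x : V) : R := sup [set dotv y x | y in G].

Definition capG (G : set V) (u : V) (h : R) : set V :=
  [set x | G x /\ supp_fun G u - h <= dotv u x].

Definition translate_set (A : set V) (q : V) : set V := [set a + q | a in A].

Definition edist_set (x : V) (A : set V) : R := inf [set enorm (x - a) | a in A].
Definition hausdorff (K L : set V) : R :=
  Num.max (sup [set edist_set x L | x in K]) (sup [set edist_set y K | y in L]).

End Defs.

(* Main.v *)
Require Import Defs.
From HB Require Import structures.
From mathcomp Require Import all_boot all_order all_algebra.
From mathcomp Require Import all_classical all_reals all_analysis.
Import Order.TTheory GRing.Theory Num.Theory.
Import numFieldNormedType.Exports.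
Local Open Scope classical_set_scope.
Local Open Scope ring_scope.

From mathcomp Require Import ring lra.
Set Implicit Arguments. Unset Strict Implicit. Unset Printing Implicit Defensive.


Lemma dotvC (R : realType) (n : nat) (x y : 'rV[R]_n) : dotv x y = dotv y x.
Proof. by apply: eq_bigr => i _; rewrite mulrC. Qed.

Lemma dotvDl (R : realType) (n : nat) (x y z : 'rV[R]_n) :
  dotv (x + y) z = dotv x z + dotv y z.
Proof. by rewrite /dotv -big_split; apply: eq_bigr => i _; rewrite !mxE mulrDl. Qed.

Lemma dotvZl (R : realType) (n : nat) (a : R) (x y : 'rV[R]_n) :
  dotv (a *: x) y = a * dotv x y.
Proof. by rewrite /dotv mulr_sumr; apply: eq_bigr => i _; rewrite !mxE mulrA. Qed.

Lemma dotvNl (R : realType) (n : nat) (x y : 'rV[R]_n) :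
  dotv (- x) y = - dotv x y.
Proof. by rewrite -scaleN1r dotvZl mulN1r. Qed.

Lemma dotvBl (R : realType) (n : nat) (x y z : 'rV[R]_n) :
  dotv (x - y) z = dotv x z - dotv y z.
Proof. by rewrite dotvDl dotvNl. Qed.

Lemma dotvDr (R : realType) (n : nat) (x y z : 'rV[R]_n) :
  dotv z (x + y) = dotv z x + dotv z y.
Proof. by rewrite !(dotvC z) dotvDl. Qed.

Lemma dotvZr (R : realType) (n : nat) (a : R) (x y : 'rV[R]_n) :
  dotv y (a *: x) = a * dotv y x.
Proof. by rewrite !(dotvC y) dotvZl. Qed.

Lemma dotvBr (R : realType) (n : nat) (x y z : 'rV[R]_n) :
  dotv z (x - y) = dotv z x - dotv z y.
Proof. by rewrite !(dotvC z) dotvBl. Qed.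

Lemma dotv_ge0 (R : realType) (n : nat) (x : 'rV[R]_n) : 0 <= dotv x x.
Proof. by apply: sumr_ge0 => i _; rewrite -expr2 sqr_ge0. Qed.

Lemma dotv_eq0 (R : realType) (n : nat) (x : 'rV[R]_n) : dotv x x = 0 -> x = 0.
Proof.
move=> /eqP; rewrite psumr_eq0; last by move=> i _; rewrite -expr2 sqr_ge0.
move=> /allP H; apply/rowP => i; rewrite mxE.
have := H i (mem_index_enum _); rewrite /= mulf_eq0 orbb => /eqP.
by [].
Qed.

Lemma enorm_sq (R : realType) (n : nat) (x : 'rV[R]_n) : enorm x ^+ 2 = dotv x x.
Proof. by rewrite /enorm sqr_sqrtr // dotv_ge0. Qed.

Lemma enorm_ge0 (R : realType) (n : nat) (x : 'rV[R]_n) : 0 <= enorm x.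
Proof. exact: sqrtr_ge0. Qed.

Lemma cauchy_schwarz (R : realType) (n : nat) (x y : 'rV[R]_n) :
  dotv x y <= enorm x * enorm y.
Proof.
have [y0|yn0] := eqVneq (dotv y y) 0.
  rewrite (dotv_eq0 y0) /dotv big1 ?mulr_ge0 ?enorm_ge0// => i _.
  by rewrite mxE mulr0.
have ypos : 0 < dotv y y by rewrite lt_neqAle eq_sym yn0 dotv_ge0.
set t := dotv x y / dotv y y.
have := dotv_ge0 (x - t *: y).
rewrite dotvBl !dotvBr !dotvZl !dotvZr (dotvC y x) => H.
have H2 : (dotv x y) ^+ 2 <= dotv x x * dotv y y.
  have e : dotv x x - t * dotv x y - (t * dotv x y - t * (t * dotv y y))
      = dotv x x - (dotv x y)^+2 / dotv y y.
    by rewrite /t; field; rewrite yn0.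
  rewrite e subr_ge0 ler_pdivrMr // in H.
have nn : 0 <= enorm x * enorm y by rewrite mulr_ge0 ?enorm_ge0.
have [xyle|xypos] := lerP (dotv x y) 0; first exact: le_trans xyle nn.
have hx : dotv x y \in Num.nneg by rewrite nnegrE ltW.
have hy : enorm x * enorm y \in Num.nneg by rewrite nnegrE.
rewrite -(@ler_pXn2r _ 2%N isT _ _ hx hy).
by rewrite exprMn !enorm_sq.
Qed.

Lemma enorm_triangle (R : realType) (n : nat) (x y : 'rV[R]_n) :
  enorm (x + y) <= enorm x + enorm y.
Proof.
have hx : enorm (x + y) \in Num.nneg by rewrite nnegrE enorm_ge0.
have hy : enorm x + enorm y \in Num.nneg by rewrite nnegrE addr_ge0 ?enorm_ge0.
rewrite -(@ler_pXn2r _ 2%N isT _ _ hx hy) sqrrD !enorm_sq dotvDl !dotvDr.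
have := cauchy_schwarz x y; rewrite (dotvC y x); lra.
Qed.

Lemma enormN (R : realType) (n : nat) (x : 'rV[R]_n) : enorm (- x) = enorm x.
Proof. by rewrite /enorm dotvNl dotvC dotvNl opprK. Qed.

Lemma enormB (R : realType) (n : nat) (x y : 'rV[R]_n) : enorm (x - y) = enorm (y - x).
Proof. by rewrite -enormN opprB. Qed.

Lemma dotv_cont (R : realType) (n : nat) (y : 'rV[R]_n) :
  continuous (fun x : 'rV[R]_n => dotv x y).
Proof.
rewrite /dotv; apply: (@continuous_big _ _ +%R 0 xpredT) => //.
  exact: add_continuous.
move=> i _ x; apply: (@cvgM _ _ _ _ (fun x : 'rV[R]_n => x ord0 i) (fun=> y ord0 i)).
  exact: nbhs_filter.
  exact: (@coord_continuous R 1 n ord0 i).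
exact: (@cvg_cst _ (y ord0 i) _ (nbhs x) _).
Qed.

Lemma dotvxx_cont (R : realType) (n : nat) :
  continuous (fun x : 'rV[R]_n => dotv x x).
Proof.
rewrite /dotv; apply: (@continuous_big _ _ +%R 0 xpredT) => //.
  exact: add_continuous.
move=> i _ x; apply: (@cvgM _ _ _ _ (fun x : 'rV[R]_n => x ord0 i) (fun x : 'rV[R]_n => x ord0 i)).
  exact: nbhs_filter.
  exact: (@coord_continuous R 1 n ord0 i).
exact: (@coord_continuous R 1 n ord0 i).
Qed.

Lemma enorm_cont (R : realType) (n : nat) : continuous (@enorm R n).
Proof.
move=> x; apply: (@continuous_comp _ _ _ (fun x : 'rV[R]_n => dotv x x) Num.sqrt).
  exact: dotvxx_cont.
exact: sqrt_continuous.
Qed.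

Lemma enorm_sub_cont (R : realType) (n : nat) (q : 'rV[R]_n) :
  continuous (fun a : 'rV[R]_n => enorm (q - a)).
Proof.
move=> x; apply: (@continuous_comp _ _ _ (fun a : 'rV[R]_n => q - a) (@enorm R n)).
  apply: (@cvgB _ _ _ (nbhs x) _ (fun=> q) (fun a => a)).
  exact: (@cvg_cst _ q _ (nbhs x) _).
  exact: cvg_id.
exact: enorm_cont.
Qed.

Lemma edist_lb (R : realType) (n : nat) (y a : 'rV[R]_n) (A : set 'rV[R]_n) :
  A a -> edist_set y A <= enorm (y - a).
Proof.
move=> Aa; apply: ge_inf; last by exists a.
by exists 0 => _ [b _ <-]; exact: enorm_ge0.
Qed.

Lemma edist_lip (R : realType) (n : nat) (y y' : 'rV[R]_n) (A : set 'rV[R]_n) :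
  A !=set0 -> edist_set y A <= edist_set y' A + enorm (y - y').
Proof.
move=> [a0 Aa0]; rewrite -lerBlDr; apply: lb_le_inf; first by exists (enorm (y' - a0)), a0.
move=> _ [a Aa <-]; rewrite lerBlDr.
apply: (le_trans (edist_lb y Aa)).
have -> : y - a = (y' - a) + (y - y') by rewrite [RHS]addrC addrA subrK.
exact: enorm_triangle.
Qed.

Lemma edist_cont (R : realType) (n : nat) (A : set 'rV[R]_n) :
  A !=set0 -> continuous (fun y => edist_set y A).
Proof.
move=> A0 y; apply/(@cvgrPdist_lt _ _ _ (nbhs y) (nbhs_filter y)) => e e0.
have := @enorm_sub_cont _ _ y y; move=> /(@cvgrPdist_lt _ _ _ (nbhs y) (nbhs_filter y)) /(_ e e0); rewrite subrr.
apply: filterS => t.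
have -> : enorm (0 : 'rV[R]_n) = 0.
  by rewrite /enorm /dotv big1 ?sqrtr0 // => i _; rewrite mxE mulr0.
rewrite sub0r normrN ger0_norm ?enorm_ge0 // => H.
rewrite ltr_norml; apply/andP; split.
  have := edist_lip t y A0; rewrite enormB; lra.
have := edist_lip y t A0; lra.
Qed.

Local Open Scope convex_scope.

Lemma conv_rV (R : realType) (n : nat) (a b : 'rV[R]_n) (t : R) (t0 : 0 <= t) (t1 : t <= 1) :
  ((a : convex_lmodType 'rV[R]_n) <| Itv01 t0 t1 |> b) = b + t *: (a - b).
Proof.
rewrite /conv /= /unstable.onem scalerBl scale1r scalerBr; by rewrite addrCA.
Qed.

Lemma dotv_expand (R : realType) (n : nat) (w v : 'rV[R]_n) (t : R) :
  dotv (w - t *: v) (w - t *: v) = dotv w w - 2 * t * dotv w v + t ^+ 2 * dotv v v.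
Proof. rewrite !dotvBl !dotvBr !dotvZl !dotvZr (dotvC v w); ring. Qed.

Lemma sup_max (R : realType) (S : set R) x :
  S x -> (forall y, S y -> y <= x) -> sup S = x.
Proof.
move=> Sx ub; apply/eqP; rewrite eq_le; apply/andP; split.
  by apply: ge_sup; [exists x | exact: ub].
by apply: sup_upper_bound => //; split; [exists x | exists x].
Qed.

Lemma inf_min (R : realType) (S : set R) x :
  S x -> (forall y, S y -> x <= y) -> inf S = x.
Proof.
move=> Sx lb; apply/eqP; rewrite eq_le; apply/andP; split.
  by apply: ge_inf => //; exists x.
by apply: lb_le_inf => //; exists x.
Qed.

Lemma far_point (R : realType) (n : nat) (A B : set 'rV[R]_n) :
  compact A -> convex_set A -> A !=set0 -> compact B -> B !=set0 ->
  exists q a0, [/\ B q, A a0,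
    enorm (q - a0) = sup [set edist_set y A | y in B] &
    forall a, A a -> dotv (q - a0) (a - a0) <= 0].
Proof.
move=> cA vA A0 cB B0.
have [q /set_mem Bq qmax] := compact_EVT_max B0 cB
  (continuous_subspaceT (edist_cont A0)).
have [a0 /set_mem Aa0 a0min] := compact_EVT_min A0 cA
  (continuous_subspaceT (@enorm_sub_cont _ _ q)).
have ed : edist_set q A = enorm (q - a0).
  apply: inf_min; first by exists a0.
  by move=> _ [a Aa <-]; apply: a0min; apply/mem_set.
exists q, a0; split => //.
  rewrite -ed; apply/esym/sup_max; first by exists q.
  by move=> _ [y By <-]; apply: qmax; apply/mem_set.
move=> a Aa.
set w := q - a0; set v := a - a0.
set c := dotv w v.
rewrite leNgt; apply/negP => c0.
have vv0 := dotv_ge0 v.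
set t := c / (dotv v v + c + 1).
have den0 : 0 < dotv v v + c + 1 by lra.
have t0 : 0 < t by rewrite divr_gt0.
have t1 : t <= 1 by rewrite ler_pdivrMr // mul1r; lra.
have ht : t * (dotv v v + c + 1) = c by rewrite /t mulfVK // gt_eqF.
have := vA a a0 (Itv01 (ltW t0) t1) (mem_set Aa) (mem_set Aa0).
rewrite conv_rV => /a0min.
have -> : q - (a0 + t *: v) = w - t *: v by rewrite /w opprD addrA.
rewrite /enorm ler_sqrt; last exact: dotv_ge0.
rewrite dotv_expand -/c => H.
have H2 : 2 * c <= t * dotv v v.
  have : t * (2 * c) <= t * (t * dotv v v) by lra.
  by rewrite ler_pM2l.
nra.
Qed.

Local Close Scope convex_scope.


Lemma interior_line (R : realType) (n : nat) (S : set 'rV[R]_n) (x u : 'rV[R]_n) :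
  interior S x -> exists2 e : R, 0 < e & S (x + e *: u) /\ S (x - e *: u).
Proof.
move=> Sx.
have hc : {for 0, continuous (fun t : R => x + t *: u)}.
  apply: cvgD; first exact: cvg_cst.
  apply: cvgZ; [exact: cvg_id | exact: cvg_cst].
have H : \forall y \near (x + 0 *: u), S y by rewrite scale0r addr0.
have /nbhs_ballP [e e0 He] := near_fun _ _ _ hc H.
rewrite /= in e0.
exists (e / 2); first by rewrite divr_gt0.
split.
  apply: (He (e / 2)); rewrite -ball_normE /ball_ /= sub0r normrN ger0_norm; lra.
rewrite -scaleNr; apply: (He (- (e / 2))).
rewrite -ball_normE /ball_ /= sub0r opprK ger0_norm; lra.
Qed.

Lemma supp_ub (R : realType) (n : nat) (G : set 'rV[R]_n) (u g : 'rV[R]_n) :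
  compact G -> G g -> dotv u g <= supp_fun G u.
Proof.
move=> cG Gg.
have G0 : G !=set0 by exists g.
have [m /set_mem Gm mmax] := compact_EVT_max G0 cG
  (continuous_subspaceT (@dotv_cont _ _ u)).
rewrite /supp_fun (@sup_max _ _ (dotv m u)); last first.
- by move=> _ [y Gy <-]; apply: mmax; apply/mem_set.
- by exists m.
by rewrite dotvC; apply: mmax; apply/mem_set.
Qed.

Lemma cap_case (R : realType) (n : nat) (G K L E : set 'rV[R]_n) (u q : 'rV[R]_n) (d : R) :
  compact G -> dotv u u = 1 -> (K `|` L) q ->
  (d <= 0 \/ forall k, E k -> dotv u k <= dotv u q - d) ->
  interior (translate_set (capG G u d) q) `<=`
     minksum G (cconv_union K L) `\` minksum G E.
Proof.
move=> cG uu KLq hyp x Sx.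
have [e e0 [[c1 [Gc1 hc1] ec1] [c2 [Gc2 hc2] ec2]]] := interior_line u Sx.
have xc1 : dotv u x = dotv u c1 + dotv u q - e.
  have : dotv u (x + e *: u) = dotv u (c1 + q) by rewrite ec1.
  rewrite !dotvDr dotvZr uu; lra.
have xc2 : dotv u x = dotv u c2 + dotv u q + e.
  have : dotv u (x - e *: u) = dotv u (c2 + q) by rewrite ec2.
  rewrite dotvBr !dotvDr dotvZr uu; lra.
have sc1 := supp_ub u cG Gc1.
case: hyp => [d0|sep].
  exfalso; lra.
split.
  have /interior_subset [c [Gc _] <-] := Sx.
  exists c => //; exists q => //.
  by move=> C _ _ /(_ q KLq).
move=> [g Gg [k Ek xe]].
have := sep k Ek; have := supp_ub u cG Gg.
have : dotv u x = dotv u g + dotv u k by rewrite -xe dotvDr.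
lra.
Qed.


Lemma unit_of_dot (R : realType) (n : nat) (u : 'rV[R]_n) : dotv u u = 1 -> unit_sphere u.
Proof. by rewrite /unit_sphere /= /enorm => ->; rewrite sqrtr1. Qed.

Lemma sep_dir (R : realType) (n : nat) (A : set 'rV[R]_n) (q a0 : 'rV[R]_n) (d : R) :
  0 < d -> enorm (q - a0) = d -> (forall a, A a -> dotv (q - a0) (a - a0) <= 0) ->
  let u := d^-1 *: (q - a0) in
  dotv u u = 1 /\ forall k, A k -> dotv u k <= dotv u q - d.
Proof.
move=> d0 hd hv u.
have ww : dotv (q - a0) (q - a0) = d ^+ 2 by rewrite -enorm_sq hd.
split.
  rewrite /u dotvZl dotvZr ww; field; lra.
move=> k Ak.
have := hv k Ak; rewrite /u !dotvZl dotvBr => H.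
have : d^-1 * (dotv (q - a0) q - dotv (q - a0) a0) = d.
  rewrite -dotvBr ww; field; lra.
have : 0 < d^-1 by rewrite invr_gt0.
nra.
Qed.

Unset Implicit Arguments.
Theorem lemma3p5 (R : realType) (n : nat) (G K L : set 'rV[R]_n) :
  (0 < n)%N ->
  convex_body G ->
  compact K -> convex_set K -> K !=set0 -> K `<=` G ->
  compact L -> convex_set L -> L !=set0 -> L `<=` G ->
  exists u : 'rV[R]_n, unit_sphere u /\
    ((exists2 q, L q &
        interior (translate_set (capG G u (hausdorff K L)) q) `<=`
          minksum G (cconv_union K L) `\` minksum G K) \/
     (exists2 q, K q &
        interior (translate_set (capG G u (hausdorff K L)) q) `<=`
          minksum G (cconv_union K L) `\` minksum G L)).
Proof.
move=> n0 [cG _] cK vK K0 KG cL vL L0 LG.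
have [d0|dpos] := lerP (hausdorff K L) 0.
  pose i0 := Ordinal n0.
  pose u0 : 'rV[R]_n := \row_j (j == i0)%:R.
  have uu : dotv u0 u0 = 1.
    rewrite /dotv (bigD1 i0) //= big1 => [|j ji0]; rewrite !mxE.
      by rewrite eqxx mulr1 addr0.
    by rewrite (negbTE ji0) mulr0.
  exists u0; split; first exact: unit_of_dot.
  have [q Lq] := L0.
  left; exists q => //.
  by apply: cap_case => //; [right | left].
move: dpos; rewrite /hausdorff.
set dK := sup [set edist_set x L | x in K].
set dL := sup [set edist_set y K | y in L].
have [le|lt] := lerP dK dL.
  move=> dpos.
  have [q [a0 [Lq Ka0 hd hv]]] := far_point cK vK K0 cL L0.
  have [uu sep] := sep_dir dpos hd hv.
  exists (dL^-1 *: (q - a0)); split; first exact: unit_of_dot.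
  left; exists q => //.
  by apply: cap_case => //; [right | right].
move=> dpos.
have [q [a0 [Kq La0 hd hv]]] := far_point cL vL L0 cK K0.
have [uu sep] := sep_dir dpos hd hv.
exists (dK^-1 *: (q - a0)); split; first exact: unit_of_dot.
right; exists q => //.
by apply: cap_case => //; [left | right].
Qed.
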